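(* Let $F$ be the field with two elements and $R$ the ring of all functions $\mathbb{N}\to F$ with pointwise operations. Let $I\subseteq R$ be the ideal of all finitely supported functions, and let $M$ be any maximal proper ideal of $R$ with $I\subseteq M$. Then $E=M$ is a set of local units for the ring $M$, but $M$ does not have enough idempotents.
   Context: For $a,b$ in a ring put $a\vee b=a+b-ab$. A set of local units for a ring $S$ is a set $E\subseteq S$ of pairwise commuting idempotents, closed under $\vee$, such that for every $s\in S$ there is $e\in E$ with $es=se=s$. A ring $S$ has enough idempotents if there is a set $\{e_i\}_{i\in I}$ of pairwise orthogonal idempotents in $S$ (i.e. $e_i^2=e_i$ and $e_ie_j=e_je_i=0$ for $i\neq j$) such that $S=\bigoplus_{i\in I} Se_i=\bigoplus_{i\in I} e_iS$. *)

(* Defs.v *)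
(* F = bool (the field with two elements: xorb = +, andb = * ). *)
From Stdlib Require Import List Arith.
Import ListNotations.

Definition R := nat -> bool.
Definition r0 : R := fun _ => false.
Definition r1 : R := fun _ => true.
Definition radd (f g : R) : R := fun n => xorb (f n) (g n).
Definition ropp (f : R) : R := fun n => f n.   (* -x = x in characteristic 2 *)
Definition rmul (f g : R) : R := fun n => andb (f n) (g n).

Definition rvee (a b : R) : R := radd (radd a b) (ropp (rmul a b)).

Definition is_ideal (J : R -> Prop) : Prop :=
  J r0 /\
  (forall x y, J x -> J y -> J (radd x y)) /\
  (forall x, J x -> J (ropp x)) /\
  (forall r x, J x -> J (rmul r x) /\ J (rmul x r)).

Definition proper_ideal (J : R -> Prop) : Prop := is_ideal J /\ ~ J r1.

Definition maximal_ideal (J : R -> Prop) : Prop :=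
  proper_ideal J /\
  forall J' : R -> Prop, proper_ideal J' -> (forall x, J x -> J' x) ->
    forall x, J' x -> J x.

Definition finsupp (f : R) : Prop := exists N, forall n, N <= n -> f n = false.

Definition local_units (S E : R -> Prop) : Prop :=
  (forall e, E e -> S e) /\
  (forall e f, E e -> E f -> rmul e f = rmul f e) /\
  (forall e, E e -> rmul e e = e) /\
  (forall e f, E e -> E f -> E (rvee e f)) /\
  (forall s, S s -> exists e, E e /\ rmul e s = s /\ rmul s e = s).

Definition rsum {Idx : Type} (l : list Idx) (a : Idx -> R) : R :=
  fold_right radd r0 (map a l).

Definition internal_direct_sum {Idx : Type} (S : R -> Prop) (P : Idx -> R -> Prop) : Prop :=
  (forall i x, P i x -> S x) /\
  (forall s, S s -> exists (l : list Idx) (a : Idx -> R),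
       NoDup l /\ (forall i, In i l -> P i (a i)) /\ s = rsum l a) /\
  (forall (l : list Idx) (a : Idx -> R),
       NoDup l -> (forall i, In i l -> P i (a i)) -> rsum l a = r0 ->
       forall i, In i l -> a i = r0).

Definition left_mult_set (S : R -> Prop) (e : R) : R -> Prop :=
  fun x => exists s, S s /\ x = rmul s e.
Definition right_mult_set (S : R -> Prop) (e : R) : R -> Prop :=
  fun x => exists s, S s /\ x = rmul e s.

Definition enough_idempotents (S : R -> Prop) : Prop :=
  exists (Idx : Type) (e : Idx -> R),
    (forall i, S (e i)) /\
    (forall i, rmul (e i) (e i) = e i) /\
    (forall i j, i <> j -> rmul (e i) (e j) = r0 /\ rmul (e j) (e i) = r0) /\
    internal_direct_sum S (fun i => left_mult_set S (e i)) /\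
    internal_direct_sum S (fun i => right_mult_set S (e i)).

(* Main.v *)
Require Import Defs.
From Stdlib Require Import List Arith.
From Stdlib Require Import Classical ClassicalEpsilon FunctionalExtensionality Lia Bool.

Fixpoint cnt (a : nat -> bool) (n : nat) : nat :=
  match n with 0 => 0 | S k => cnt a k + (if a k then 1 else 0) end.

Lemma cnt_mono a : forall n k, n <= k -> cnt a n <= cnt a k.
Proof. intros n k H; induction H; simpl; [lia|destruct (a m); lia]. Qed.

Lemma cnt_ivt a N v : cnt a N <= v -> forall K, v + 1 <= cnt a K ->
  exists n, N <= n /\ cnt a n = v /\ a n = true.
Proof.
  intros HN K; induction K as [|K IH]; intros HK.
  - simpl in HK; lia.
  - destruct (le_lt_dec (v+1) (cnt a K)) as [h|h]; [now apply IH|].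
    simpl in HK. destruct (a K) eqn:E; [|lia].
    exists K. split; [|split; [lia|exact E]].
    destruct (le_lt_dec N K) as [h2|h2]; [exact h2|].
    assert (cnt a (S K) <= cnt a N) by (apply cnt_mono; lia).
    simpl in H; rewrite E in H; lia.
Qed.

Lemma cnt_unbdd a : (forall N, exists n, N <= n /\ a n = true) ->
  forall v, exists K, v <= cnt a K.
Proof.
  intros Ha v; induction v as [|v [K HK]]; [exists 0; lia|].
  destruct (Ha K) as [n [h1 h2]]. exists (S n). simpl; rewrite h2.
  pose proof (cnt_mono a K n h1); lia.
Qed.

Lemma cnt_parity a : (forall N, exists n, N <= n /\ a n = true) ->
  forall N b, exists n, N <= n /\ a n = true /\ Nat.even (cnt a n) = b.
Proof.
  intros Ha N b.
  assert (exists v, cnt a N <= v /\ Nat.even v = b) as [v [h1 h2]].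
  { destruct (Bool.bool_dec (Nat.even (cnt a N)) b).
    - now exists (cnt a N).
    - exists (S (cnt a N)); split; [lia|]. rewrite Nat.even_succ, <- Nat.negb_even.
      destruct b, (Nat.even (cnt a N)); simpl in *; congruence. }
  destruct (cnt_unbdd a Ha (v+1)) as [K HK].
  destruct (cnt_ivt a N v h1 K HK) as [n [? [? ?]]].
  exists n; repeat split; auto; congruence.
Qed.

Lemma rsum_true {Idx : Type} (l : list Idx) (a : Idx -> R) n :
  rsum l a n = true -> exists i, In i l /\ a i n = true.
Proof.
  induction l as [|i l IH]; simpl; unfold rsum; simpl.
  - unfold r0; discriminate.
  - unfold radd. destruct (a i n) eqn:E; intros H.
    + exists i; auto.
    + simpl in H. destruct (IH H) as [j [? ?]]; exists j; auto.
Qed.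

Definition V {Idx : Type} (e : Idx -> R) (l : list Idx) : R :=
  fold_right rvee r0 (map e l).


Lemma V_spec {Idx : Type} (e : Idx -> R) l n :
  V e l n = true <-> exists i, In i l /\ e i n = true.
Proof.
  induction l as [|i l IH]; simpl.
  - unfold r0; split; [discriminate|intros [? [[] _]]].
  - change (V e (i::l) n) with (rvee (e i) (V e l) n).
    unfold rvee, radd, ropp, rmul.
    split.
    + intros H. destruct (e i n) eqn:E; [exists i; auto|].
      destruct (V e l n) eqn:E2; [|simpl in H; discriminate].
      destruct (proj1 IH eq_refl) as [j [? ?]]; exists j; auto.
    + intros [j [[<-|h] h2]].
      * rewrite h2. destruct (V e l n); reflexivity.
      * assert (V e l n = true) by (apply IH; eauto). rewrite H.
        destruct (e i n); reflexivity.
Qed.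

Lemma V_M (M : R -> Prop) {Idx : Type} (e : Idx -> R) :
  is_ideal M -> (forall i, M (e i)) -> forall l, M (V e l).
Proof.
  intros [H0 [HA [HO HM]]] He l; induction l; simpl; auto.
  unfold rvee. apply HA; [apply HA; auto|apply HO, HM; auto].
Qed.

Lemma dichotomy (M : R -> Prop) f : maximal_ideal M -> M f \/ M (radd r1 f).
Proof.
  intros [[[H0 [HA [HO HM]]] H1] Hmax].
  set (J := fun x => exists m r, M m /\ x = radd m (rmul r f)).
  destruct (classic (J r1)) as [[m [r [Hm E]]]|HJ].
  - right. assert (Eq : radd r1 f = rmul (radd r1 f) m).
    2:{ rewrite Eq; apply (proj1 (HM _ _ Hm)). }
    + apply functional_extensionality; intro n.
      assert (E' := f_equal (fun g => g n) E). unfold radd, rmul, r1 in *; simpl in *.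
      destruct (f n), (m n), (r n); simpl in *; congruence.
  - left. apply (Hmax J).
    + split; [|exact HJ]. unfold J; repeat split.
      * exists r0, r0; split; auto; try (apply functional_extensionality; reflexivity).
      * intros x y [m1 [s1 [? ->]]] [m2 [s2 [? ->]]]. exists (radd m1 m2), (radd s1 s2).
        split; auto. apply functional_extensionality; intro n; unfold radd, rmul.
        destruct (m1 n), (m2 n), (s1 n), (s2 n), (f n); reflexivity.
      * intros x Hx; exact Hx.
      * match goal with H : exists _ _, _ |- _ => destruct H as [m [t [Hm' ->]]] end.
        match goal with |- exists _ _, _ /\ rmul ?s _ = _ => rename s into s' end.
        exists (rmul s' m), (rmul s' t). split; [apply (proj1 (HM _ _ Hm'))|].
        apply functional_extensionality; intro n; unfold radd, rmul.
        destruct (m n), (s' n), (t n), (f n); reflexivity.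
      * match goal with H : exists _ _, _ |- _ => destruct H as [m [t [Hm' ->]]] end.
        match goal with |- exists _ _, _ /\ rmul _ ?s = _ => rename s into s' end.
        exists (rmul m s'), (rmul t s'). split; [apply (proj2 (HM _ _ Hm'))|].
        apply functional_extensionality; intro n; unfold radd, rmul.
        destruct (m n), (s' n), (t n), (f n); reflexivity.
    + intros x Hx. exists x, r0. split; auto; try (apply functional_extensionality; intro n;
      unfold radd, rmul, r0; destruct (x n); reflexivity).
    + exists r0, r1. split; auto; try (apply functional_extensionality; intro n;
      unfold radd, rmul, r0, r1; destruct (f n); reflexivity).
Qed.

Theorem mainTheorem16 (M : R -> Prop) :
  maximal_ideal M -> (forall f, finsupp f -> M f) ->
  local_units M M /\ ~ enough_idempotents M.
Proof.
  intros Hmax Hfin.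
  pose proof Hmax as [[Hid H1] _].
  pose proof Hid as [H0 [HA [HO HM]]].
  split.
  { repeat split; auto.
    - intros e f _ _. apply functional_extensionality; intro n; unfold rmul; apply andb_comm.
    - intros e _. apply functional_extensionality; intro n; unfold rmul; apply andb_diag.
    - intros e f He Hf. unfold rvee. apply HA; [apply HA; auto|apply HO, HM; auto].
    - intros s Hs. exists s. split; [auto|]. split;
      apply functional_extensionality; intro n; unfold rmul; apply andb_diag. }
  intros [Idx [e [HeM [Hidem [Horth [[_ [Hdec _]] _]]]]]].
  assert (Hdisj : forall i j n, e i n = true -> e j n = true -> i = j).
  { intros i j n h1 h2. destruct (classic (i = j)) as [|hne]; auto.
    destruct (Horth i j hne) as [h _].
    assert (h' := f_equal (fun g => g n) h). unfold rmul, r0 in h'; simpl in h'.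
    rewrite h1, h2 in h'; discriminate. }
  assert (Hcov : forall s, M s -> exists l, forall n, s n = true -> V e l n = true).
  { intros s Hs. destruct (Hdec s Hs) as [l [a [_ [Ha ->]]]]. exists l.
    intros n Hn. destruct (rsum_true l a n Hn) as [i [Hi Hain]].
    destruct (Ha i Hi) as [t [_ Et]]. rewrite Et in Hain. unfold rmul in Hain.
    apply V_spec. exists i; split; auto. destruct (t n), (e i n); simpl in *; congruence. }
  set (a := fun n => if excluded_middle_informative
          (forall m, m < n -> forall i, ~ (e i m = true /\ e i n = true)) then true else false).
  assert (A1 : forall n m i, a n = true -> a m = true -> e i n = true -> e i m = true -> n = m).
  { intros n m i hn hm h1 h2. unfold a in hn, hm.
    destruct excluded_middle_informative as [Pn|]; [|discriminate].
    destruct excluded_middle_informative as [Pm|]; [|discriminate].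
    destruct (lt_eq_lt_dec n m) as [[h|h]|h]; auto.
    - exfalso; apply (Pm n h i); auto.
    - exfalso; apply (Pn m h i); auto. }
  assert (A2 : forall n, exists n', a n' = true /\ (n' = n \/ exists i, e i n' = true /\ e i n = true)).
  { intro n; induction n as [n IH] using lt_wf_ind.
    destruct (a n) eqn:E; [exists n; auto|].
    unfold a in E; destruct excluded_middle_informative as [|NP]; [discriminate|].
    apply not_all_ex_not in NP as [m NP].
    apply imply_to_and in NP as [hm NP]. apply not_all_ex_not in NP as [i NP].
    apply NNPP in NP as [h1 h2].
    destruct (IH m hm) as [n' [ha [->|[j [h3 h4]]]]].
    - exists m; split; auto. right; exists i; auto.
    - exists n'; split; auto. right; exists j; split; auto.
      rewrite (Hdisj j i m h4 h1); auto. }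
  assert (Aunc : forall l, ~ (forall n, a n = true -> V e l n = true)).
  { intros l Hl. apply H1.
    replace r1 with (V e l); [apply V_M; auto|].
    apply functional_extensionality; intro n. unfold r1.
    destruct (A2 n) as [n' [ha [->|[i [h1 h2]]]]]; [auto|].
    apply V_spec. specialize (Hl n' ha); apply V_spec in Hl. destruct Hl as [j [hj h3]].
    exists j; split; auto. rewrite (Hdisj j i n' h3 h1); auto. }
  assert (Abdd : forall l, exists N, forall n, a n = true -> V e l n = true -> n < N).
  { induction l as [|i l [N IH]].
    - exists 0; intros n _ h. apply V_spec in h as [? [[] _]].
    - destruct (classic (exists p, a p = true /\ e i p = true)) as [[p [hp1 hp2]]|hno].
      + exists (max N (S p)). intros n hn hv. apply V_spec in hv as [j [[<-|hj] hj2]].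
        * rewrite (A1 n p i hn hp1 hj2 hp2); lia.
        * assert (n < N) by (apply IH; auto; apply V_spec; eauto). lia.
      + exists N. intros n hn hv. apply V_spec in hv as [j [[<-|hj] hj2]].
        * exfalso; apply hno; eauto.
        * apply IH; auto; apply V_spec; eauto. }
  assert (Aunb : forall N, exists n, N <= n /\ a n = true).
  { intros N. apply NNPP; intro hno.
    assert (Mg : M (fun n => Nat.ltb n N)).
    { apply Hfin. exists N; intros n hn. apply Nat.ltb_ge; auto. }
    destruct (Hcov _ Mg) as [l Hl]. apply (Aunc l). intros n hn. apply Hl.
    apply Nat.ltb_lt. destruct (le_lt_dec N n) as [h|h]; auto.
    exfalso; apply hno; eauto. }
  set (f := fun n => andb (a n) (Nat.even (cnt a n))).
  destruct (dichotomy M f Hmax) as [Hf|Hf]; apply Hcov in Hf as [l Hl];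
    destruct (Abdd l) as [N HN].
  - destruct (cnt_parity a Aunb N true) as [n [h1 [h2 h3]]].
    assert (n < N); [|lia]. apply HN; auto. apply Hl. unfold f; rewrite h2, h3; auto.
  - destruct (cnt_parity a Aunb N false) as [n [h1 [h2 h3]]].
    assert (n < N); [|lia]. apply HN; auto. apply Hl.
    unfold radd, r1, f; rewrite h2, h3; auto.
Qed.
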